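(* Let $\Sigma,\Gamma$ be finite alphabets, $w \in \Sigma^+$, $h:\Sigma^*\to\Gamma^*$ an injective morphism, and suppose $h(w) = x^r$ with $x \in \Gamma^+$ of minimal length and $r \in \mathbb{Q}$. If $a\in\Sigma$ satisfies $|h(a)| \ge |x|$ and $ava$ and $aua$ are factors of $w$ for some words $u, v \in (\Sigma\setminus\{a\})^*$, then $u = v$.
   Context: For a nonempty word $x$ and rational $r$ with $r|x|$ a nonnegative integer, $x^r$ denotes the prefix of length $r|x|$ of the infinite word $xxx\cdots$. *)

(* Defs.v *)
From mathcomp Require Import all_boot all_order all_algebra.
Set Implicit Arguments. Unset Strict Implicit. Unset Printing Implicit Defensive.
Import GRing.Theory Num.Theory.

Definition word_morph (S G : Type) (h : S -> seq G) (s : seq S) : seq G :=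
  flatten (map h s).

(* xpow x n = prefix of length n of the infinite word x x x ... (x nonempty) *)
Definition xpow (G : Type) (x : seq G) (n : nat) : seq G :=
  take n (flatten (nseq n x)).

(* y = x^r : x nonempty, r |x| is a nonnegative integer equal to |y|,
   and y is the prefix of length r|x| of x x x ... *)
Definition is_ratpow (G : Type) (y x : seq G) (r : rat) : Prop :=
  x <> [::] /\ (0 <= r)%R /\ (r * (size x)%:R = (size y)%:R)%R /\ y = xpow x (size y).

(* Main.v *)
Require Import Defs.
From mathcomp Require Import all_boot all_order all_algebra.
From mathcomp Require Import zify.
Import GRing.Theory Num.Theory.

Lemma size_pos (T : Type) (x : seq T) : x <> [::] -> 0 < size x.
Proof. by case: x. Qed.

Lemma nth_flatten_nseq (T : Type) (x0 : T) (x : seq T) m i :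
  i < m * size x -> nth x0 (flatten (nseq m x)) i = nth x0 x (i %% size x).
Proof.
elim: m i => [|m IH] i /=; first by rewrite mul0n.
rewrite mulSn => Hi; rewrite nth_cat; case: ltnP => Hix.
  by rewrite modn_small.
rewrite IH; last by lia.
by rewrite -{2}(subnK Hix) modnDr.
Qed.

Lemma size_flatten_nseq (T : Type) (t : seq T) m :
  size (flatten (nseq m t)) = m * size t.
Proof. by elim: m => //= m IH; rewrite size_cat IH mulSn. Qed.

Lemma nth_xpow (T : Type) (x0 : T) x n i : x <> [::] -> i < n ->
  nth x0 (xpow x n) i = nth x0 x (i %% size x).
Proof.
move=> Hx Hi; have Hp : 0 < size x by exact: size_pos.
rewrite /xpow nth_take // nth_flatten_nseq //.
by apply: (leq_trans Hi); rewrite leq_pmulr.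
Qed.

Lemma xpow_of (T : Type) (x0 : T) t y : t <> [::] ->
  (forall i, i < size y -> nth x0 y i = nth x0 t (i %% size t)) ->
  y = xpow t (size y).
Proof.
move=> Ht H; have Hp : 0 < size t by exact: size_pos.
have Hs : size (xpow t (size y)) = size y.
  by rewrite /xpow size_takel // size_flatten_nseq leq_pmulr.
apply: (@eq_from_nth _ x0); first by rewrite Hs.
by move=> i Hi; rewrite H // nth_xpow.
Qed.

Lemma ratpow_of (T : Type) (Y t : seq T) : t <> [::] -> Y = xpow t (size Y) ->
  is_ratpow Y t ((size Y)%:R / (size t)%:R).
Proof.
move=> Ht HY; split; first done.
split; first by rewrite divr_ge0 ?ler0n.
split; last done.
by rewrite divfK // pnatr_eq0 -lt0n size_pos.
Qed.

Definition periodic {T : Type} (f : nat -> T) d := forall n, f (n + d) = f n.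

Lemma per_mul (T : Type) (f : nat -> T) d k : periodic f d -> forall n, f (n + k * d) = f n.
Proof. by move=> H; elim: k => [|k IH] n; rewrite ?mul0n ?addn0 // mulSn addnA IH H. Qed.

Lemma per_mod (T : Type) (f : nat -> T) a b : periodic f a -> periodic f b -> periodic f (a %% b).
Proof.
move=> Ha Hb n; rewrite -(per_mul _ _ _ (a %/ b) Hb) -addnA [_ %% _ + _]addnC -divn_eq.
exact: Ha.
Qed.

Lemma per_gcd (T : Type) (f : nat -> T) b : forall a, periodic f a -> periodic f b -> periodic f (gcdn a b).
Proof.
elim/ltn_ind: b => b IH a Ha Hb.
case: (posnP b) => [->|Hb0]; first by rewrite gcdn0.
rewrite gcdnC -gcdn_modr.
apply: IH => //; first exact: ltn_pmod.
exact: per_mod.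
Qed.

Lemma pos_cong (G : Type) (x0 : G) (Y x : seq G) (r : rat) (ha : seq G) i j :
  is_ratpow Y x r ->
  (forall (x' : seq G) (r' : rat), is_ratpow Y x' r' -> size x <= size x') ->
  size x <= size ha ->
  (forall t, t < size ha -> nth x0 Y (i + t) = nth x0 ha t /\ i + t < size Y) ->
  (forall t, t < size ha -> nth x0 Y (j + t) = nth x0 ha t /\ j + t < size Y) ->
  i = j %[mod size x].
Proof.
move=> HR Hmin Hle.
wlog: i j / i <= j.
  move=> W Hi Hj; case: (leqP i j) => [le|lt]; first exact: W.
  by symmetry; apply: W => //; exact: ltnW.
move=> Hij Hi Hj.
case: HR => Hx [_ [_ HY]].
set p := size x.
have Hp : 0 < p by exact: size_pos.
pose f n := nth x0 x (n %% p).
have HYf : forall n, n < size Y -> nth x0 Y n = f n.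
  by move=> n Hn; rewrite HY nth_xpow.
have Hf1 : forall t, t < p -> f (i + t) = f (j + t).
  move=> t Ht; have Ht' : t < size ha by apply: leq_trans Hle.
  case: (Hi t Ht') => E1 L1; case: (Hj t Ht') => E2 L2.
  by rewrite -HYf // -HYf // E1 E2.
have Hf2 : forall t, f (i + t) = f (j + t).
  move=> t; rewrite /f -modnDmr -[(j + t) %% p]modnDmr.
  exact: (Hf1 (t %% p) (ltn_pmod _ Hp)).
have HfP : forall n k, f (n + k * p) = f n.
  by move=> n k; rewrite /f addnC modnMDl.
have Hpp : periodic f p by move=> n; rewrite -[p]mul1n HfP.
set D := j - i.
have HD : periodic f D.
  move=> n.
  have Hip : i <= i * p by rewrite leq_pmulr.
  rewrite -(HfP (n + D) i).
  have -> : n + D + i * p = (n + i * p - i) + j by rewrite /D; lia.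
  rewrite addnC -Hf2 addnC.
  have -> : n + i * p - i + i = n + i * p by lia.
  by rewrite HfP.
set g := gcdn D p.
have Hg : periodic f g by exact: per_gcd.
have Hg0 : 0 < g by rewrite gcdn_gt0 Hp orbT.
have Hgp : g <= p by apply: dvdn_leq => //; exact: dvdn_gcdr.
set t := take g x.
have Hts : size t = g by rewrite size_takel.
have Ht0 : t <> [::] by move=> E; move: Hts; rewrite E /= => E'; rewrite -E' in Hg0.
have HYt : Y = xpow t (size Y).
  apply: (xpow_of _ x0) => // n Hn.
  rewrite HYf // Hts.
  have -> : f n = f (n %% g) by rewrite {1}(divn_eq n g) addnC per_mul.
  have Hng : n %% g < g by exact: ltn_pmod.
  by rewrite /f (modn_small (leq_trans Hng Hgp)) nth_take.
have := Hmin _ _ (ratpow_of _ _ _ Ht0 HYt); rewrite Hts -/p => Hpg.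
have Egp : g = p by apply/eqP; rewrite eqn_leq Hgp Hpg.
have : p %| D by rewrite -Egp dvdn_gcdl.
move/dvdnP => [k Hk].
have -> : j = k * p + i by rewrite -Hk /D; lia.
by rewrite modnMDl.
Qed.

Lemma wm_cat (S G : Type) (h : S -> seq G) s1 s2 :
  word_morph h (s1 ++ s2) = word_morph h s1 ++ word_morph h s2.
Proof. by rewrite /word_morph map_cat flatten_cat. Qed.

Lemma wm_cons (S G : Type) (h : S -> seq G) a s :
  word_morph h (a :: s) = h a ++ word_morph h s.
Proof. by []. Qed.

Theorem lemma6 (S G : finType) (w : seq S) (h : S -> seq G) (x : seq G) (r : rat)
  (a : S) (u v : seq S) :
  w <> [::] ->
  injective (word_morph h) ->
  is_ratpow (word_morph h w) x r ->
  (forall (x' : seq G) (r' : rat), is_ratpow (word_morph h w) x' r' -> size x <= size x') ->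
  size x <= size (h a) ->
  a \notin u -> a \notin v ->
  infix (a :: v ++ [:: a]) w ->
  infix (a :: u ++ [:: a]) w ->
  u = v.
Proof.
move=> _ Hinj HR Hmin Hle Hau Hav /infixP [w1 [w2 Ew]] /infixP [w3 [w4 Ew']].
have Hx : x <> [::] by case: HR.
have [x0 _] : {y : G | true} by case E: x Hx => [|y s] // _; exists y.
set Y := word_morph h w.
have occ : forall s w1 w2, w = w1 ++ (a :: s ++ [:: a]) ++ w2 ->
   let i := size (word_morph h w1) in
   let L := size (word_morph h (a :: s)) in
   (forall t, t < L -> nth x0 Y (i + t) = nth x0 (word_morph h (a :: s)) t /\ i + t < size Y)
   /\ (forall t, t < size (h a) -> nth x0 Y (i + t) = nth x0 (h a) t /\ i + t < size Y)
   /\ (forall t, t < size (h a) -> nth x0 Y (i + L + t) = nth x0 (h a) t /\ i + L + t < size Y).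
  move=> s v1 v2 E i L.
  have EY : Y = word_morph h v1 ++ word_morph h (a :: s) ++ h a ++ word_morph h v2.
    rewrite /Y E !wm_cat !wm_cons wm_cat /= /word_morph /= cats0 -!catA.
    done.
  have HsY : size Y = i + L + size (h a) + size (word_morph h v2).
    by rewrite EY size_cat -/i size_cat -/L !size_cat !addnA.
  split; [|split] => t Ht.
  - split; last by lia.
    by rewrite EY nth_cat -/i ltnNge leq_addr /= addKn nth_cat -/L Ht.
  - split; last by (rewrite /L wm_cons size_cat in HsY; lia).
    rewrite EY nth_cat -/i ltnNge leq_addr /= addKn wm_cons -catA nth_cat Ht //.
  - split; last by lia.
    rewrite EY nth_cat -/i ltnNge (leq_trans (leq_addr L i) (leq_addr t _)) /=.
    rewrite -addnA addKn nth_cat -/L ltnNge leq_addr /= addKn nth_cat Ht //.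
have [Av1 [Av2 Av3]] := occ v w1 w2 Ew.
have [Au1 [Au2 Au3]] := occ u w3 w4 Ew'.
set i := size (word_morph h w1) in Av1 Av2 Av3.
set i' := size (word_morph h w3) in Au1 Au2 Au3.
set L := size (word_morph h (a :: v)) in Av1 Av2 Av3.
set L' := size (word_morph h (a :: u)) in Au1 Au2 Au3.
have Cii' : i = i' %[mod size x] by exact: (pos_cong _ x0 _ _ _ _ _ _ HR Hmin Hle Av2 Au2).
have CL : i = i + L %[mod size x] by exact: (pos_cong _ x0 _ _ _ _ _ _ HR Hmin Hle Av2 Av3).
have CL' : i' = i' + L' %[mod size x] by exact: (pos_cong _ x0 _ _ _ _ _ _ HR Hmin Hle Au2 Au3).
case: HR => _ [_ [_ HY]].
have Hp : 0 < size x by exact: size_pos.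
pose g n := nth x0 x ((i + n) %% size x).
have Hv : forall t, t < L -> nth x0 (word_morph h (a :: v)) t = g t.
  move=> t Ht; have [E1 L1] := Av1 t Ht.
  by rewrite -E1 /Y HY nth_xpow.
have Hu : forall t, t < L' -> nth x0 (word_morph h (a :: u)) t = g t.
  move=> t Ht; have [E1 L1] := Au1 t Ht.
  by rewrite -E1 /Y HY nth_xpow // /g -modnDml -Cii' modnDml.
have gL : forall n, g (L + n) = g n.
  move=> n; rewrite /g addnA -modnDml -CL modnDml //.
have gL' : forall n, g (L' + n) = g n.
  move=> n; rewrite /g.
  have E : i + (L' + n) = i + n %[mod size x].
    have E1 : (i + L') %% size x = i %% size x by rewrite -modnDml Cii' modnDml -CL'.
    by rewrite addnA -modnDml E1 modnDml.
  by rewrite E.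
have Hcomm : word_morph h (a :: v ++ a :: u) = word_morph h (a :: u ++ a :: v).
  rewrite -!cat_cons !wm_cat.
  apply: (@eq_from_nth _ x0); first by rewrite !size_cat -/L -/L' addnC.
  move=> t; rewrite size_cat -/L -/L' => Ht.
  rewrite [LHS]nth_cat [RHS]nth_cat -/L -/L'.
  case: (ltnP t L) => H1; case: (ltnP t L') => H2.
  - by rewrite Hv // Hu.
  - rewrite Hv // Hv; last by lia.
    by rewrite -{1}(subnKC H2) gL'.
  - rewrite Hu; last by lia. rewrite Hu //.
    by rewrite -[in RHS](subnKC H1) gL.
  - rewrite Hu; last by lia. rewrite Hv; last by lia.
    by rewrite -(gL (t - L)) -(gL' (t - L')); congr g; lia.
have := Hinj _ _ Hcomm => /= [[E]].
have := congr1 (fun s => take (index a s) s) E => /=.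
rewrite !index_cat (negbTE Hau) (negbTE Hav) /= eqxx addn0.
by rewrite addn0 !take_size_cat.

Qed.
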